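(* Let $n\ge3$, $\xi\in[0,1]$, and consider the star-to-complete network with adjacency matrix $\mathbf A^\xi$, $\theta_i=1$ for all $i$, and $F(p)=p$ on $[0,1]$. If the optimal value of problem (P4) (mixed-autonomy system) is strictly greater than the optimal value of (P4) with the additional constraint $z_i=0$ for all $i$ (human-only system), then $k=s/\omega\le1-\beta$.
   Context: Star-to-complete network: for $n\ge3$ and $\xi\in[0,1]$, $\mathbf A^\xi=[\alpha_{ij}]$ is the $n\times n$ matrix with $\alpha_{ii}=0$ for all $i$, $\alpha_{1j}=\frac1{n-1}$ for $j\ne1$, $\alpha_{i1}=c_1:=\frac{\xi}{n-1}+(1-\xi)$ for $i\ne1$, and $\alpha_{ij}=c_2:=\frac{\xi}{n-1}$ for $i,j\ne1$, $i\ne j$. Parameters: $\beta\in(0,1)$ (probability a driver remains in the platform each period), $\omega>0$ (drivers' lifetime outside-option earnings), $s\ge0$ (cost of operating an autonomous vehicle for a driver's expected lifetime), $k=s/\omega$. Problem (P4): maximize over $\{p_i,\delta_i,x_i,y_{ij},z_i,r_{ij}\}$ the objective $\sum_i p_i\theta_i(1-F(p_i))-\omega\sum_i\delta_i-s\sum_i z_i$ subject to, for all $i$: $d_i=\theta_i(1-F(p_i))$; $x_i=\beta\big[\sum_j\alpha_{ji}\min\{x_j,d_j\}+\sum_j y_{ji}\big]+\delta_i$; $\sum_j y_{ij}=\max\{x_i-d_i,0\}$; $z_i=\sum_j\alpha_{ji}\max\{d_j-x_j,0\}+\sum_j r_{ji}$; $\sum_j r_{ij}=z_i-\max\{d_i-x_i,0\}$;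 all variables nonnegative. *)

(* Defs.v *)
From HB Require Import structures.
From mathcomp Require Import all_boot all_order all_algebra.
From mathcomp Require Import all_classical all_reals.
From mathcomp Require Import ereal.

Set Implicit Arguments. Unset Strict Implicit. Unset Printing Implicit Defensive.
Import Order.TTheory GRing.Theory Num.Theory.
Local Open Scope ring_scope.
Local Open Scope classical_set_scope.
Local Open Scope ereal_scope.
Local Open Scope ring_scope.

(* Nodes are 'I_n; node "1" of the paper is the ordinal with value 0 (the hub). *)

Definition alpha_stc {R : realType} (n : nat) (xi : R) (i j : 'I_n) : R :=
  if i == j then 0
  else if val i == 0%N then (n.-1%:R)^-1
  else if val j == 0%N then xi / (n.-1%:R) + (1 - xi)
  else xi / (n.-1%:R).

Definition F_unif {R : realType} (p : R) : R := Num.min (Num.max p 0) 1.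

(* theta_i = 1 *)
Definition demand {R : realType} (p : R) : R := 1 * (1 - F_unif p).

Record sol (R : realType) (n : nat) := Sol {
  s_p : 'I_n -> R; s_delta : 'I_n -> R; s_x : 'I_n -> R;
  s_y : 'I_n -> 'I_n -> R; s_z : 'I_n -> R; s_r : 'I_n -> 'I_n -> R }.

Definition P4_feasible {R : realType} (n : nat) (xi beta : R) (v : sol R n) : Prop :=
  let A := @alpha_stc R n xi in
  let p := s_p v in let delta := s_delta v in let x := s_x v in
  let y := s_y v in let z := s_z v in let r := s_r v in
  let d := fun i => demand (p i) in
  (forall i, x i = beta * (\sum_j A j i * Num.min (x j) (d j) + \sum_j y j i) + delta i)
  /\ (forall i, \sum_j y i j = Num.max (x i - d i) 0)
  /\ (forall i, z i = \sum_j A j i * Num.max (d j - x j) 0 + \sum_j r j i)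
  /\ (forall i, \sum_j r i j = z i - Num.max (d i - x i) 0)
  /\ (forall i, 0 <= p i /\ 0 <= delta i /\ 0 <= x i /\ 0 <= z i /\ 0 <= d i)
  /\ (forall i j, 0 <= y i j /\ 0 <= r i j).

Definition P4_objective {R : realType} (n : nat) (omega s : R) (v : sol R n) : R :=
  \sum_i s_p v i * demand (s_p v i) - omega * \sum_i s_delta v i - s * \sum_i s_z v i.

Definition P4_value {R : realType} (n : nat) (xi beta omega s : R) : \bar R :=
  ereal_sup [set (@P4_objective R n omega s v)%:E | v in [set v | @P4_feasible R n xi beta v]].

Definition P4_human_value {R : realType} (n : nat) (xi beta omega s : R) : \bar R :=
  ereal_sup [set (@P4_objective R n omega s v)%:E |
             v in [set v | @P4_feasible R n xi beta v /\ forall i, s_z v i = 0]].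

(* Main.v *)
Require Import Defs.
From HB Require Import structures.
From mathcomp Require Import all_boot all_order all_algebra.
From mathcomp Require Import all_classical all_reals.
From mathcomp Require Import ereal.
From mathcomp Require Import ring lra.

Import Order.TTheory GRing.Theory Num.Theory.
Local Open Scope ring_scope.

Lemma minmax_aux (R : realType) (a b : R) : Num.min a b + Num.max (b - a) 0 = b.
Proof.
have [h|h] := leP a b.
  rewrite max_l; [ring|lra].
rewrite max_r; [ring|lra].
Qed.

Lemma maxmax_aux (R : realType) (a b : R) : Num.max (a - b) 0 - Num.max (b - a) 0 = a - b.
Proof.
have [h|h] := leP a b.
  rewrite (max_r (x:=a-b)); last lra. rewrite max_l; [ring|lra].
rewrite (max_l (x:=a-b)); last lra. rewrite (max_r (x:=b-a)); [ring|lra].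
Qed.

Lemma key (R : realType) (n : nat) (xi beta omega s : R) (v : sol R n) :
  0 < beta < 1 -> 0 < omega -> omega * (1 - beta) <= s ->
  P4_feasible (n:=n) xi beta v ->
  exists v' : sol R n, (P4_feasible xi beta v' /\ forall i, s_z v' i = 0) /\
    P4_objective (n:=n) omega s v <= P4_objective omega s v'.
Proof.
case: v => p delta x y z r /= /andP[b0 b1] om0 hs.
rewrite /P4_feasible /=.
set A := @alpha_stc R n xi.
pose d := fun i => demand (p i).
move=> [hx [hy [hz [hr [hnn hyr]]]]].
have zge : forall i, d i - x i <= z i.
  move=> i; have := hr i.
  have : 0 <= \sum_j r i j by apply: sumr_ge0 => j _; case: (hyr i j).
  move=> h1 h2; have : Num.max (d i - x i) 0 <= z i by lra.
  by apply: le_trans; rewrite le_max lexx.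
have dle : forall i, d i <= x i + z i by move=> i; have := zge i; lra.
exists (Sol p (fun i => delta i + (1 - beta) * z i) (fun i => x i + z i)
  (fun i j => y i j + r i j) (fun _ => 0) (fun _ _ => 0)).
split; first split.
- rewrite /P4_feasible /= -/A; rewrite /d in dle zge.
  split.
    move=> i.
    have -> : \sum_j A j i * Num.min (x j + z j) (d j)
       = \sum_j A j i * Num.min (x j) (d j) + \sum_j A j i * Num.max (d j - x j) 0.
      rewrite -big_split /=; apply: eq_bigr => j _.
      by rewrite -mulrDr minmax_aux (min_r (dle j)).
    rewrite big_split /=.
    have := hx i; have := hz i.
    set S1 := \sum_j _; set S2 := \sum_j _; set S3 := \sum_j _; set S4 := \sum_j _.
    move=> e1 e2; rewrite e2 e1; ring.
  split.
    move=> i; rewrite big_split /= hy hr.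
    rewrite [RHS]max_l; last by have := dle i; lra.
    have := @maxmax_aux R (x i) (demand (p i)); lra.
  split.
    move=> i; rewrite big1 ?addr0; last by move=> j _; rewrite max_r ?mulr0 //; have := dle j; lra.
    by rewrite big1_eq addr0.
  split.
    move=> i; rewrite big1 // max_r; last by have := dle i; lra.
    ring.
  split.
    move=> i; have [h1 [h2 [h3 [h4 h5]]]] := hnn i.
    have hb : 0 <= (1 - beta) * z i by apply: mulr_ge0; lra.
    split=> //; split; first lra. split; first lra. by [].
  move=> i j; have [h1 h2] := hyr i j; split; lra.
- by [].
- rewrite /P4_objective /=.
  rewrite big_split /= -mulr_sumr big1_eq.
  have hZ : 0 <= \sum_i z i by apply: sumr_ge0 => i _; case: (hnn i) => _ [] _ [] _ [].
  set D := \sum_i delta i; set Z := \sum_i z i.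
  have : omega * (1 - beta) * Z <= s * Z by apply: ler_wpM2r.
  lra.
Qed.

Theorem proposition1 (R : realType) (n : nat) (xi beta omega s : R) :
  (3 <= n)%N -> 0 <= xi <= 1 -> 0 < beta < 1 -> 0 < omega -> 0 <= s ->
  (P4_human_value n xi beta omega s < P4_value n xi beta omega s)%E ->
  s / omega <= 1 - beta.
Proof.
move=> _ _ hb hom hs hlt.
rewrite leNgt; apply/negP => hgt.
have hs' : omega * (1 - beta) <= s.
  rewrite ltr_pdivlMr // in hgt; rewrite mulrC; exact: ltW.
move: hlt; apply/negP; rewrite -leNgt.
apply: ge_ereal_sup => _ [v hv <-].
have [v' [hv' hle]] := @key R n xi beta omega s v hb hom hs' hv.
apply: le_ereal_sup_tmp; exists (P4_objective omega s v')%:E.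
  exists v'; [exact: hv' | reflexivity].
by rewrite lee_fin.
Qed.
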